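(* Let $(X,\preceq,\{H_n\})$ be a half-space order and let a group $G$ act on $X$ by quasi-automorphisms. Let $T_X:G\to\mathbb{R}$, $T_X(g)=\lim_{n\to\infty}\frac{h(g^na,a)}{n}$ (any $a\in X$), be the associated translation number, and let $\leq$ be the relation on $G$ induced by the action. Then $T_X$ sandwiches $\leq$, i.e. there is $C>0$ such that $\{g\in G: T_X(g)\geq C\}\subset G^+:=\{g\in G: g\geq e\}$.
   Context: A half-space filtration of $X$ is $\{H_n\}_{n\in\mathbb{Z}}$ with $H_{n+1}\subsetneq H_n$, $\bigcap H_n=\emptyset$, $\bigcup H_n=X$; height $h(a)=\sup\{n: a\in H_n\}$, $h(a,b)=h(a)-h(b)$. A half-space order $(X,\preceq,\{H_n\})$: $(X,\preceq)$ a poset, $\{H_n\}$ a half-space filtration, and for a constant $w$, $h(a,b)\geq w\Rightarrow a\succeq b$. The $G$-action (by bijections, not necessarily order-preserving) is by quasi-automorphisms if for some $d$, $|h(ga,gb)-h(a,b)|\leq d$ for all $g,a,b$; the limit defining $T_X$ then exists and is independent of $a$. The induced relation on $G$ is $g\leq h\Leftrightarrow\forall k\in G\,\forall x\in X:\ (kg).x\preceq(kh).x$. *)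

(* Defs.v *)
From Stdlib Require Import Reals ZArith ClassicalEpsilon.
From Coquelicot Require Import Coquelicot.
Open Scope R_scope.

Definition half_space_filtration {X : Type} (H : Z -> X -> Prop) : Prop :=
  (forall n a, H (n + 1)%Z a -> H n a) /\
  (forall n, exists a, H n a /\ ~ H (n + 1)%Z a) /\
  (forall a, ~ (forall n, H n a)) /\
  (forall a, exists n, H n a).

(* height h(a) = sup {n : a in H_n}; for integers the sup is the maximum. *)
Definition height {X : Type} (H : Z -> X -> Prop) (a : X) : Z :=
  epsilon (inhabits 0%Z) (fun n => H n a /\ forall m, H m a -> (m <= n)%Z).

Definition rel_height {X : Type} (H : Z -> X -> Prop) (a b : X) : Z :=
  (height H a - height H b)%Z.

Definition is_poset {X : Type} (le : X -> X -> Prop) : Prop :=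
  (forall a, le a a) /\
  (forall a b, le a b -> le b a -> a = b) /\
  (forall a b c, le a b -> le b c -> le a c).

Definition half_space_order {X : Type} (le : X -> X -> Prop) (H : Z -> X -> Prop) : Prop :=
  is_poset le /\ half_space_filtration H /\
  exists w : Z, forall a b, (rel_height H a b >= w)%Z -> le b a.

Definition is_group {G : Type} (mul : G -> G -> G) (e : G) (inv : G -> G) : Prop :=
  (forall x y z, mul x (mul y z) = mul (mul x y) z) /\
  (forall x, mul e x = x) /\
  (forall x, mul (inv x) x = e).

Definition is_action {G X : Type} (mul : G -> G -> G) (e : G) (act : G -> X -> X) : Prop :=
  (forall x, act e x = x) /\
  (forall g k x, act (mul g k) x = act g (act k x)).

Definition quasi_automorphic {G X : Type} (H : Z -> X -> Prop) (act : G -> X -> X) : Prop :=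
  exists d : Z, forall g a b,
    (Z.abs (rel_height H (act g a) (act g b) - rel_height H a b) <= d)%Z.

Fixpoint gpow {G : Type} (mul : G -> G -> G) (e : G) (g : G) (n : nat) : G :=
  match n with
  | O => e
  | S n => mul g (gpow mul e g n)
  end.

Definition translation_number {G X : Type} (mul : G -> G -> G) (e : G)
  (act : G -> X -> X) (H : Z -> X -> Prop) (g : G) (a : X) : R :=
  real (Lim_seq (fun n => IZR (rel_height H (act (gpow mul e g n) a) a) / INR n)).

Definition induced_le {G X : Type} (mul : G -> G -> G) (act : G -> X -> X)
  (le : X -> X -> Prop) (g k : G) : Prop :=
  forall l x, le (act (mul l g) x) (act (mul l k) x).

(* Main.v *)
Require Import Defs.
From Stdlib Require Import Reals ZArith Lia Lra.
From Coquelicot Require Import Coquelicot.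
Open Scope R_scope.

Lemma pow_bound (X G : Type) (H : Z -> X -> Prop)
  (mul : G -> G -> G) (e : G) (act : G -> X -> X) (d : Z) g a :
  (forall x, act e x = x) ->
  (forall g k x, act (mul g k) x = act g (act k x)) ->
  (forall g a b, (Z.abs (rel_height H (act g a) (act g b) - rel_height H a b) <= d)%Z) ->
  forall n, (rel_height H (act (gpow mul e g n) a) a <= Z.of_nat n * (rel_height H (act g a) a + d))%Z.
Proof.
  intros He Hm Hq n; induction n as [|n IH]; cbn [gpow].
  - rewrite He; unfold rel_height; lia.
  - rewrite Hm. specialize (Hq g (act (gpow mul e g n) a) a).
    change (Z.of_nat (S n)) with (Z.of_nat (S n)); rewrite ?Nat2Z.inj_succ, ?Zpos_P_of_succ_nat, ?Z.mul_succ_l.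
    try (replace (Z.of_nat (S n)) with (Z.succ (Z.of_nat n)) by lia; rewrite Z.mul_succ_l).
    revert IH Hq. unfold rel_height.
    generalize (Z.of_nat n * (height H (act g a) - height H a + d))%Z. intros. lia.
Qed.

Theorem proposition2p6 (X G : Type) (le : X -> X -> Prop) (H : Z -> X -> Prop)
  (mul : G -> G -> G) (e : G) (inv : G -> G) (act : G -> X -> X) :
  half_space_order le H ->
  is_group mul e inv ->
  is_action mul e act ->
  quasi_automorphic H act ->
  exists C : R, C > 0 /\
    forall g : G,
      (exists a : X, translation_number mul e act H g a >= C) ->
      induced_le mul act le e g.
Proof.
  intros [_ [_ [w Hw]]] _ [He Hm] [d Hq].
  exists (IZR (Z.abs w + 3 * Z.abs d + 1)). split.
  { apply IZR_lt. lia. }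
  intros g [a Ha] l x.
  assert (Hb : (rel_height H (act g a) a + d >= Z.abs w + 3 * Z.abs d + 1)%Z).
  { unfold translation_number in Ha.
    set (u := fun n => IZR (rel_height H (act (gpow mul e g n) a) a) / INR n) in Ha.
    set (M := IZR (rel_height H (act g a) a + d)).
    assert (Hle : Rbar_le (Lim_seq u) (Lim_seq (fun _ => M))).
    { apply Lim_seq_le_loc. exists 1%nat. intros n Hn. unfold u.
      assert (Hn0 : 0 < INR n) by (apply lt_0_INR; lia).
      apply Rle_div_l; [exact Hn0|].
      rewrite INR_IZR_INZ. unfold M. rewrite <- mult_IZR. apply IZR_le.
      pose proof (pow_bound X G H mul e act d g a He Hm Hq n). lia. }
    rewrite Lim_seq_const in Hle.
    set (c := IZR (Z.abs w + 3 * Z.abs d + 1)) in *.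
    destruct (Lim_seq u) as [L| |] eqn:EL; simpl in Ha, Hle.
    - assert (HH : c <= M).
      { lra. } unfold c in HH.
      unfold M in HH. apply le_IZR in HH. lia.
    - contradiction.
    - assert (0 < c) by (unfold c; apply IZR_lt; lia). lra. }
  apply Hw.
  rewrite !Hm, He.
  pose proof (Hq l (act g x) x) as Q1.
  pose proof (Hq g x a) as Q2.
  unfold rel_height in *. lia.
Qed.
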